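(* In the setting below, every $p\in X$, written $p=\sum_{e_i\in S_p}\lambda_ie_i$ (normalized so that $\min_{e_i\in S_p}\lambda_i=1$), satisfies $\lambda_i=1$ for all $e_i\in S_p$ except for at most one index $j$, for which $\lambda_j>1$.
   Context: Setting: $E=\{e_0,\dots,e_n\}\subset\mathbb R^n$ is the vertex set of an $n$-simplex with $e_0+\cdots+e_n=0$, and $X\subset\mathbb R^n\setminus\{0\}$ is a finite set with $E\subseteq X$, no element of $X$ a positive multiple of another, such that every $n+1$ points of $X$ are in good position. (A finite set $A$ is in conical position if $0\notin\operatorname{conv}A$ and no point of $A$ lies in the positive hull—set of nonnegative linear combinations—of the other points; it is in good position otherwise.) For $p\in X$, the support $S_p$ is the minimal subset of $E$ whose positive hull contains $p$; then $p=\sum_{e_i\in S_p}\lambda_ie_i$ uniquely with all $\lambda_i>0$. Convention: each $p\in X$ is replaced by the positive multiple for which $\min_{e_i\in S_p}\lambda_i=1$ (this does not affect the hypotheses). *)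

(* Defs.v *)
From HB Require Import structures.
From mathcomp Require Import all_boot all_order all_algebra.
Set Implicit Arguments. Unset Strict Implicit. Unset Printing Implicit Defensive.
Import Order.TTheory GRing.Theory Num.Theory.
Local Open Scope ring_scope.

Section Defs.
Variables (R : realFieldType) (n : nat).
Notation V := 'rV[R]_n.

Definition in_pos_hull (A : seq V) (v : V) : Prop :=
  exists c : V -> R, (forall a, a \in A -> 0 <= c a) /\ v = \sum_(a <- undup A) c a *: a.

Definition in_conv (A : seq V) (v : V) : Prop :=
  exists c : V -> R, [/\ forall a, a \in A -> 0 <= c a,
                         \sum_(a <- undup A) c a = 1 &
                         v = \sum_(a <- undup A) c a *: a].

Definition conical_position (A : seq V) : Prop :=
  ~ in_conv A 0 /\ forall a, a \in A -> ~ in_pos_hull [seq b <- A | b != a] a.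

Definition good_position (A : seq V) : Prop := ~ conical_position A.

Definition affinely_independent (e : 'I_n.+1 -> V) : Prop :=
  forall c : 'I_n.+1 -> R, \sum_i c i = 0 -> \sum_i c i *: e i = 0 -> forall i, c i = 0.

Definition in_pos_hull_idx (e : 'I_n.+1 -> V) (S : {set 'I_n.+1}) (v : V) : Prop :=
  exists c : 'I_n.+1 -> R, (forall i, i \in S -> 0 <= c i) /\ v = \sum_(i in S) c i *: e i.

Definition is_support (e : 'I_n.+1 -> V) (S : {set 'I_n.+1}) (p : V) : Prop :=
  in_pos_hull_idx e S p /\ forall S' : {set 'I_n.+1}, S' \proper S -> ~ in_pos_hull_idx e S' p.

End Defs.

(* Main.v *)
Require Import Defs.
From HB Require Import structures.
From mathcomp Require Import all_boot all_order all_algebra.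
From mathcomp Require Import lra.
Import Order.TTheory GRing.Theory Num.Theory.
Local Open Scope ring_scope.

Section Aux.
Variables (R : realFieldType) (n : nat) (e : 'I_n.+1 -> 'rV[R]_n).
Hypothesis Hai : affinely_independent e.
Hypothesis Hsum : \sum_i e i = 0.

Lemma Kc (f : 'I_n.+1 -> R) : \sum_i f i *: e i = 0 -> forall i j, f i = f j.
Proof.
move=> Hf.
set a := (\sum_i f i) / (n.+1)%:R.
have Hn : (n.+1)%:R != 0 :> R by rewrite pnatr_eq0.
have H := @Hai (fun i => f i - a).
have H1 : \sum_i (f i - a) = 0.
  rewrite sumrB sumr_const card_ord -mulr_natr /a divfK //; exact: subrr.
have H2 : \sum_i (f i - a) *: e i = 0.
  under eq_bigr do rewrite scalerBl.
  by rewrite sumrB -scaler_sumr Hsum scaler0 Hf subr0.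
move=> i j; have := H H1 H2 i; have := H H1 H2 j => /eqP; rewrite subr_eq0 => /eqP ->.
by move/eqP; rewrite subr_eq0 => /eqP.
Qed.

Lemma K2 (f g : 'I_n.+1 -> R) : \sum_i f i *: e i = \sum_i g i *: e i ->
  forall i j, f i - g i = f j - g j.
Proof.
move=> H; apply: Kc.
under eq_bigr do rewrite scalerBl.
by rewrite sumrB H subrr.
Qed.

Lemma sum_delta (a : 'I_n.+1) : \sum_i ((i == a)%:R : R) *: e i = e a.
Proof.
rewrite (bigD1 a) //= eqxx scale1r big1 ?addr0 // => i /negbTE ->.
by rewrite scale0r.
Qed.

Lemma e_inj : injective e.
Proof.
move=> a b Hab; apply/eqP; apply/negP => /negP Hne.
have := @K2 (fun i => ((i == a)%:R : R)) (fun i => ((i == b)%:R : R)).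
rewrite !sum_delta => /(_ Hab a b).
rewrite !eqxx (negbTE Hne) eq_sym (negbTE Hne) /=. lra.
Qed.

Lemma sum_if (P : pred 'I_n.+1) (F : 'I_n.+1 -> R) :
  \sum_i (if P i then F i else 0) *: e i = \sum_(i | P i) F i *: e i.
Proof.
rewrite [RHS]big_mkcond; apply: eq_bigr => i _; by case: (P i); rewrite ?scale0r.
Qed.

Lemma sum_g (a : R) (s : 'I_n.+1 -> R) (P : pred 'I_n.+1) (F : 'I_n.+1 -> R) :
  \sum_i (a * s i + (if P i then F i else 0)) *: e i =
  a *: \sum_i s i *: e i + \sum_(i | P i) F i *: e i.
Proof.
under eq_bigr do rewrite scalerDl -scalerA.
by rewrite big_split /= -scaler_sumr sum_if.
Qed.

End Aux.

Theorem proposition6p1 (R : realFieldType) (n : nat)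
  (e : 'I_n.+1 -> 'rV[R]_n) (X : seq 'rV[R]_n) :
  affinely_independent e ->
  \sum_i e i = 0 ->
  (forall i, e i \in X) ->
  0 \notin X ->
  (forall p q, p \in X -> q \in X -> forall t : R, 0 < t -> p = t *: q -> p = q) ->
  (forall A : seq 'rV[R]_n, uniq A -> size A = n.+1 -> {subset A <= X} ->
     good_position A) ->
  forall p, p \in X ->
  forall (S : {set 'I_n.+1}) (lam : 'I_n.+1 -> R),
    is_support e S p ->
    (forall i, i \in S -> 0 < lam i) ->
    p = \sum_(i in S) lam i *: e i ->
  (* normalization: t is the positive factor making min_{i in S} t*lam_i = 1 *)
  forall t : R, 0 < t ->
    (forall i, i \in S -> 1 <= t * lam i) ->
    (exists2 i, i \in S & t * lam i = 1) ->
  exists2 j, j \in S &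
    forall i, i \in S -> i != j -> t * lam i = 1.
Proof.
move=> Hai Hsum HeX H0 Hmul Hgood p pX S lam [Hsp Hmin] Hlam Hp t Ht Hge [m mS Hm].
case: (boolP [exists j, (j \in S) && (t * lam j != 1)]); last first.
  move=> /existsPn Hall; exists m => // i iS _.
  by have := Hall i; rewrite iS /= negbK => /eqP.
move=> /existsP [j /andP [jS Hj]]; exists j => // k kS Hkj.
case: (eqVneq (t * lam k) 1) => // Hk; exfalso.
have Hle : forall i, i \in S -> lam m <= lam i.
  move=> i iS; rewrite -(ler_pM2l Ht) Hm; exact: Hge.
have Hlt : forall i, i \in S -> t * lam i != 1 -> lam m < lam i.
  move=> i iS Hi; rewrite -(ltr_pM2l Ht) Hm lt_neqAle eq_sym Hi /=; exact: Hge.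
have Hjm := Hlt j jS Hj; have Hkm := Hlt k kS Hk.
have Hm0 := Hlam m mS.
clear Hj Hk Hlt Hge Hm Hmul.
set s := fun i => if i \in S then lam i else 0.
have Hps : p = \sum_i s i *: e i.
  rewrite Hp big_mkcond /=; apply: eq_bigr => i _; rewrite /s.
  by case: ifP; rewrite ?scale0r.
have [i0 i0S] : exists i0, i0 \notin S.
  case: (pickP (fun i => i \notin S)) => [i0 Hi0|Hall]; first by exists i0.
  exfalso; apply: (Hmin (S :\ m)); first exact: properD1.
  exists (fun i => lam i - lam m); split.
    by move=> i; rewrite in_setD1 => /andP [_ iS]; rewrite subr_ge0 Hle.
  have SF : forall i, i \in S by move=> i; have := Hall i => /= /negbFE.
  rewrite (eq_bigl (fun i => i != m)); last by move=> i; rewrite in_setD1 SF andbT.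
  rewrite Hp [in LHS](eq_bigl xpredT); last by move=> i; rewrite /= SF.
  rewrite (bigD1 m) //=.
  under [in RHS]eq_bigr do rewrite scalerBl.
  rewrite sumrB -scaler_sumr.
  have -> : \sum_(i | i != m) e i = - e m.
    by have := Hsum; rewrite (bigD1 m) //= => /eqP; rewrite addrC addr_eq0 => /eqP.
  by rewrite scalerN opprK addrC.
have einj := @e_inj R n e Hai Hsum.
have K := @K2 R n e Hai Hsum.
have Hjnm : j != m by apply/eqP => E; move: Hjm; rewrite E ltxx.
have Hi0m : i0 != m by apply/eqP => E; move: i0S; rewrite E mS.
set L := enum (predC1 m).
have pnot : p \notin map e L.
  apply/mapP => [[i _ Hpi]].
  have := K s (fun x => (x == i)%:R); rewrite sum_delta -Hps => /(_ Hpi) Hc.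
  case: (boolP (i \in S)) => iS.
  - apply: (Hmin [set i]).
      rewrite properEneq sub1set iS andbT; apply/eqP => Es.
      move: mS jS; rewrite -Es !inE => /eqP Em /eqP Ej.
      by move: Hjnm; rewrite Em Ej eqxx.
    by exists (fun _ => 1); split => //; rewrite big_set1 scale1r.
  - have Him : (m == i) = false by apply/negbTE; apply/eqP => E; rewrite -E mS in iS.
    have := Hc i m; rewrite /s /= (negbTE iS) mS eqxx Him /=. lra.
have uA : uniq (p :: map e L) by rewrite cons_uniq pnot (map_inj_uniq einj) enum_uniq.
have sA : size (p :: map e L) = n.+1 by rewrite /= size_map -cardE cardC1 card_ord.
have subA : {subset p :: map e L <= X}.
  by move=> x; rewrite inE => /orP [/eqP -> // | /mapP [i _ ->]]; exact: HeX.
have eA : forall i, i != m -> e i \in p :: map e L.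
  by move=> i Hi; rewrite inE map_f ?orbT // mem_enum inE.
apply: (Hgood _ uA sA subA); split.
- move=> [c [c0 c1 cs]].
  rewrite undup_id // big_cons big_map big_enum /= in c1.
  rewrite undup_id // big_cons big_map big_enum /= in cs.
  set g := fun i => c p * s i + (if i != m then c (e i) else 0).
  have Hg : \sum_i g i *: e i = 0.
    rewrite /g sum_g -Hps [RHS]cs; congr (_ + _); apply: eq_bigl => x; by rewrite inE.
  have Hc := @Kc R n e Hai Hsum _ Hg.
  have cp := c0 p (mem_head _ _).
  have cj := c0 (e j) (eA j Hjnm).
  have := Hc m j; rewrite /g /s /= mS jS eqxx Hjnm /= => H1.
  have cp0 : c p = 0 by nra.
  have ci0 : forall i, i != m -> c (e i) = 0.
    move=> i Hi; have := Hc i m; rewrite /g /s /= Hi eqxx cp0 /=; lra.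
  move: c1; rewrite cp0 big1 ?add0r; last by move=> i; rewrite inE; exact: ci0.
  by move/eqP; rewrite eq_sym oner_eq0.
- move=> a; rewrite inE => /orP [/eqP -> | /mapP [i iL ->]].
  + have -> : [seq b <- p :: map e L | b != p] = map e L.
      rewrite /= eqxx /=; apply/all_filterP/allP => x xL; apply/eqP => E.
      by rewrite -E xL in pnot.
    move=> [c [c0 cs]].
    rewrite undup_id ?(map_inj_uniq einj) ?enum_uniq // big_map big_enum in cs.
    have E1 : \sum_i s i *: e i = \sum_i (if i != m then c (e i) else 0) *: e i.
      by rewrite -Hps sum_if cs; apply: eq_bigl => x; rewrite inE.
    have Hc := K _ _ E1.
    have ci0 : 0 <= c (e i0) by apply: c0; rewrite map_f // mem_enum inE.
    have := Hc m i0; rewrite /s /= mS (negbTE i0S) eqxx Hi0m /=; lra.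
  + have iL0 := iL; rewrite mem_enum inE in iL.
    have -> : [seq b <- p :: map e L | b != e i] = p :: map e [seq x <- L | x != i].
      rewrite /= ifT; last by apply/eqP => E; rewrite E (map_f e iL0) in pnot.
      congr (_ :: _); rewrite filter_map; congr map; apply: eq_filter => x /=.
      by rewrite (inj_eq einj).
    have uB : uniq (p :: map e [seq x <- L | x != i]).
      rewrite cons_uniq (map_inj_uniq einj) filter_uniq ?enum_uniq // andbT.
      apply: contra pnot => /mapP [x xin ->]; apply/mapP; exists x => //.
      by move: xin; rewrite mem_filter => /andP [].
    move=> [c [c0 cs]].
    rewrite undup_id // big_cons big_map big_filter big_enum_cond in cs.
    set g := fun x => c p * s x + (if (x != m) && (x != i) then c (e x) else 0).
    have E1 : \sum_x ((x == i)%:R : R) *: e x = \sum_x g x *: e x.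
      rewrite sum_delta /g sum_g -Hps [LHS]cs; congr (_ + _).
    have Hc := K _ _ E1.
    have [l [lS lm li Hl]] : exists l, [/\ l \in S, l != m, l != i & lam m < lam l].
      case: (eqVneq j i) => [ji|ji]; [exists k | exists j]; split => //.
        by apply/eqP => E; move: Hkm; rewrite E ltxx.
      by rewrite -ji.
    have cp : 0 <= c p by apply: c0; exact: mem_head.
    have cl : 0 <= c (e l).
      by apply: c0; rewrite inE map_f ?orbT // mem_filter li mem_enum inE lm.
    have Him : (m == i) = false by apply/negbTE; rewrite eq_sym.
    have := Hc l m; rewrite /g /s /= lS mS lm li eqxx (negbTE li) Him /= => H1.
    have cp0 : c p = 0 by nra.
    have := Hc i m; rewrite /g /s /= mS !eqxx Him cp0 andbF /= !mul0r; lra.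
Qed.
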